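(* There exists a positive integer $d_0$ such that the following holds for all integers $d \geq d_0$. Let $n \geq d+1$ be an even integer, and let $G$ be a $d$-regular graph on $[n]$. Then there exists a balanced bipartition $\{X,Y\}$ of $[n]$ (i.e. $|X|=|Y|=n/2$) such that for each graph $H \in \{G[X,Y], G[X], G[Y]\}$, we have $\frac{d}{2}-d^{2/3}\leq \deg_H(v) \leq \frac{d}{2} + d^{2/3}$ for every $v \in V(H)$.
   Context: Graphs are simple and finite. For $U\subseteq V(G)$, $G[U]$ is the induced subgraph on $U$; for disjoint $X,Y\subseteq V(G)$, $G[X,Y]$ is the bipartite subgraph with vertex set $X\cup Y$ consisting of all edges of $G$ with one endpoint in $X$ and the other in $Y$. *)

(* Defs.v *)
From Stdlib Require Import Reals.
From mathcomp Require Import all_boot.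

Definition simple_graph (n : nat) (e : rel 'I_n) : Prop :=
  symmetric e /\ irreflexive e.

Definition regular (n : nat) (e : rel 'I_n) (d : nat) : Prop :=
  forall v : 'I_n, #|[set u | e v u]| = d.

Definition deg_induced (n : nat) (e : rel 'I_n) (X : {set 'I_n}) (v : 'I_n) : nat :=
  #|[set u in X | e v u]|.

(* Degree of v (v in X :|: Y, X Y disjoint) in the bipartite subgraph G[X,Y]. *)
Definition deg_bip (n : nat) (e : rel 'I_n) (X Y : {set 'I_n}) (v : 'I_n) : nat :=
  if v \in X then #|[set u in Y | e v u]| else #|[set u in X | e v u]|.

Local Open Scope R_scope.
Definition deg_ok (d k : nat) : Prop :=
  (INR d / 2 - Rpower (INR d) (2 / 3) <= INR k <= INR d / 2 + Rpower (INR d) (2 / 3)).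

Arguments simple_graph {n} e.
Arguments regular {n} e d.
Arguments deg_induced {n} e X v.
Arguments deg_bip {n} e X Y v.

(* Main.v *)
Require Import Defs.
From Stdlib Require Import Reals Lra Lia.
From mathcomp Require Import all_boot all_order all_algebra.
From mathcomp Require Import Rstruct zify.

Local Open Scope R_scope.



Lemma card_bigcup_le (T I : finType) (S : {pred I}) (F : I -> {set T}) :
  (#|\bigcup_(i in S) F i| <= \sum_(i in S) #|F i|)%N.
Proof.
elim/big_rec2: _ => [|i U n _ h]; first by rewrite cards0.
rewrite cardsU; apply: leq_trans (leq_subr _ _) _; exact: leq_add.
Qed.

Lemma bigR_le (I : Type) (r : seq I) (P : pred I) (F G : I -> R) :
  (forall j, P j -> F j <= G j) ->
  \big[Rplus/0]_(j <- r | P j) F j <= \big[Rplus/0]_(j <- r | P j) G j.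
Proof.
move=> h; apply: (big_ind2 (fun x y => x <= y)) => //.
  by apply: Rle_refl.
by move=> a b c d h1 h2; apply: Rplus_le_compat.
Qed.

Lemma bigR_const (I : finType) (P : {pred I}) (c : R) :
  \big[Rplus/0]_(j in P) c = INR #|P| * c.
Proof.
rewrite big_const; elim: #|P| => [|n IHn]; first by rewrite /=; lra.
rewrite iterS IHn S_INR; lra.
Qed.

Lemma INR_sum (I : finType) (P : {pred I}) (f : I -> nat) :
  INR (\sum_(j in P) f j) = \big[Rplus/0]_(j in P) INR (f j).
Proof. by apply: (big_morph INR plus_INR). Qed.

Lemma INR_le {m n : nat} : (m <= n)%N -> INR m <= INR n.
Proof. by move/leP; apply: le_INR. Qed.

Lemma INR_cardsID (T : finType) (A B : {set T}) :
  INR #|A| = INR #|A :&: B| + INR #|A :\: B|.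
Proof. by rewrite -plus_INR plusE cardsID. Qed.

Definition Bs (T I : finType) (A : I -> {set T}) (S : {set I}) : {set T} :=
  \bigcap_(j in S) ~: A j.
Arguments Bs {T I} A S.

Section LLLsec.
Lemma lll_step {T I : finType} {A : I -> {set T}} {G : I -> {set I}} {p D : R}
  (Hind : forall i (S : {set I}), [disjoint S & G i] ->
     INR #|A i :&: Bs A S| * INR #|T| <= INR #|A i| * INR #|Bs A S|)
  (HA : forall i, INR #|A i| <= p * INR #|T|)
  (HG : forall i, INR #|G i| <= D)
  (Hp0 : 0 <= p) (HpD : 4 * p * D <= 1) (Hp2 : 2 * p < 1)
  (HT : (0 < #|T|)%N) (S : {set I}) :
  (forall S' : {set I}, (#|S'| < #|S|)%N ->
     (0 < #|Bs A S'|)%N /\ forall i, i \notin S' ->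
        INR #|A i :&: Bs A S'| <= 2 * p * INR #|Bs A S'|) ->
  (0 < #|Bs A S|)%N /\ forall i, i \notin S ->
        INR #|A i :&: Bs A S| <= 2 * p * INR #|Bs A S|.
Proof.
move=> IH.
have HTR : 0 < INR #|T| by apply: lt_0_INR; apply/ltP.
have indep : forall i (S' : {set I}), [disjoint S' & G i] ->
    INR #|A i :&: Bs A S'| <= p * INR #|Bs A S'|.
  move=> i S' hd; have := Hind i S' hd; have := HA i.
  have := pos_INR #|Bs A S'|; have := pos_INR #|A i :&: Bs A S'|.
  move=> h1 h2 h3 h4.
  apply: (Rmult_le_reg_r (INR #|T|)) => //.
  apply: Rle_trans h4 _.
  have : INR #|A i| * INR #|Bs A S'| <= p * INR #|T| * INR #|Bs A S'|.
    by apply: Rmult_le_compat_r.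
  lra.
split.
- case: (set_0Vmem S) => [-> | [i Hi]].
    rewrite /Bs big_set0 cardsT //.
  have hlt : (#|S :\ i| < #|S|)%N by rewrite (cardsD1 i S) Hi.
  have [pos hb] := IH (S :\ i) hlt.
  have hni : i \notin S :\ i by rewrite setD11.
  have := hb i hni.
  rewrite /Bs (big_setD1 i Hi) /=.
  set B' := \bigcap_(j in S :\ i) ~: A j.
  have e1 := INR_cardsID _ B' (A i).
  have -> : ~: A i :&: B' = B' :\: A i by rewrite setDE setIC.
  rewrite setIC => hc.
  have hp : 0 < INR #|B'| by apply: lt_0_INR; apply/ltP.
  have : 0 < INR #|B' :\: A i| by nra.
  by move=> h; apply/ltP; apply: INR_lt; rewrite /=; lra.
- move=> i Hi.
  case: (boolP (S :&: G i == set0)) => [h0 | hn0].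
    have hd : [disjoint S & G i] by rewrite -setI_eq0.
    have := indep i S hd.
    move=> h1; have := pos_INR #|Bs A S|; move=> h2; nra.
  set S1 := S :&: G i; set S2 := S :\: G i.
  have hS2 : (#|S2| < #|S|)%N.
    rewrite -(cardsID (G i) S) -/S1 -/S2.
    have : (0 < #|S1|)%N by rewrite card_gt0.
    lia.
  have [pos2 hb2] := IH S2 hS2.
  have dis2 : [disjoint S2 & G i].
    rewrite -setI_eq0; apply/eqP/setP=> x; rewrite !inE.
    by case: (x \in G i); rewrite ?andbF.
  have hi2 := indep i S2 dis2.
  have eS : Bs A S = Bs A S1 :&: Bs A S2.
    by rewrite /Bs -bigcap_setU /S1 /S2 setID.
  have sub1 : (#|A i :&: Bs A S| <= #|A i :&: Bs A S2|)%N.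
    by apply: subset_leq_card; rewrite eS setIA; apply: setSI; exact: subsetIl.
  have sub2 : Bs A S2 \subset Bs A S :|: \bigcup_(j in S1) (A j :&: Bs A S2).
    apply/subsetP=> x hx.
    case: (pickP (fun j => (j \in S1) && (x \in A j))) => [j /andP[hj hxj] | none].
      rewrite inE; apply/orP; right; apply/bigcupP; exists j => //.
      by rewrite inE hxj hx.
    rewrite inE; apply/orP; left; rewrite eS inE hx andbT.
    apply/bigcapP=> j hj; rewrite inE.
    by have := none j; rewrite hj /= => ->.
  have c2 := subset_leq_card sub2.
  have c3 := leq_trans c2 (leq_trans (leq_card_setU _ _) (leq_add (leqnn _) (card_bigcup_le _ _ _ _))).
  have c4 := INR_le c3.
  rewrite -plusE plus_INR INR_sum in c4.
  have c5 : \big[Rplus/0]_(j in S1) INR #|A j :&: Bs A S2| <=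
            \big[Rplus/0]_(j in S1) (2 * p * INR #|Bs A S2|).
    apply: bigR_le => j hj; apply: hb2.
    by move: hj; rewrite !inE => /andP[_ ->].
  rewrite bigR_const in c5.
  have hs1 : INR #|S1| <= D.
    apply: Rle_trans (HG i); apply: INR_le; apply: subset_leq_card; exact: subsetIr.
  have sub1' := INR_le sub1.
  have := pos_INR #|Bs A S2|; have := pos_INR #|Bs A S|.
  have := pos_INR #|S1|.
  move=> q1 q2 q3.
  have : INR #|S1| * (2 * p * INR #|Bs A S2|) <= D * (2 * p * INR #|Bs A S2|).
    apply: Rmult_le_compat_r => //; nra.
  move=> hh.
  have hD : D * (2 * p * INR #|Bs A S2|) <= INR #|Bs A S2| / 2.
    have : 0 <= INR #|Bs A S2| * (1 - 4 * p * D) by apply: Rmult_le_pos; lra.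
    lra.
  have hb : INR #|Bs A S2| <= 2 * INR #|Bs A S| by lra.
  have : p * INR #|Bs A S2| <= p * (2 * INR #|Bs A S|) by apply: Rmult_le_compat_l.
  lra.
Qed.
End LLLsec.

Lemma lll (T I : finType) (A : I -> {set T}) (G : I -> {set I}) (p D : R)
  (Hind : forall i (S : {set I}), [disjoint S & G i] ->
     INR #|A i :&: Bs A S| * INR #|T| <= INR #|A i| * INR #|Bs A S|)
  (HA : forall i, INR #|A i| <= p * INR #|T|)
  (HG : forall i, INR #|G i| <= D)
  (Hp0 : 0 <= p) (HpD : 4 * p * D <= 1) (Hp2 : 2 * p < 1)
  (HT : (0 < #|T|)%N) :
  exists x : T, forall i, x \notin A i.
Proof.
have claim : forall k (S : {set I}), (#|S| <= k)%N ->
  (0 < #|Bs A S|)%N /\ forall i, i \notin S ->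
        INR #|A i :&: Bs A S| <= 2 * p * INR #|Bs A S|.
  elim=> [|k IHk] S hS; apply: (lll_step Hind HA HG Hp0 HpD Hp2 HT) => S' hS'.
    by move: hS' hS; lia.
  by apply: IHk; move: hS' hS; lia.
have [pos _] := claim _ [set: I] (leqnn _).
case/card_gt0P: pos => x hx; exists x => i.
move/bigcapP: hx => /(_ i (in_setT i)).
by rewrite inE.
Qed.


Definition mergef {K : finType} (C : {set K}) (f g : {ffun K -> bool}) : {ffun K -> bool} :=
  [ffun k => if k \in C then f k else g k].

Lemma indep_prod (K : finType) (C : {set K}) (A B : {set {ffun K -> bool}})
  (hA : forall f g : {ffun K -> bool}, (forall k, k \in C -> f k = g k) -> (f \in A) = (g \in A))
  (hB : forall f g : {ffun K -> bool}, (forall k, k \notin C -> f k = g k) -> (f \in B) = (g \in B)) :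
  (#|A :&: B| * #|{ffun K -> bool}| = #|A| * #|B|)%N.
Proof.
pose phi (x : {ffun K -> bool} * {ffun K -> bool}) :=
  (mergef C x.1 x.2, mergef C x.2 x.1).
have phiK : involutive phi.
  move=> [f g]; rewrite /phi /=; congr (_, _); apply/ffunP=> k; rewrite !ffunE;
  by case: (k \in C).
have e : phi @^-1: (setX A B) = setX (A :&: B) setT.
  apply/setP=> [[f g]]; rewrite !inE /= andbT.
  rewrite (hA (mergef C f g) f); last by move=> k hk; rewrite ffunE hk.
  rewrite (hB (mergef C g f) f) //; last by move=> k hk; rewrite ffunE (negbTE hk).
have := card_preimset (setX A B) (inv_inj phiK).
by rewrite e !cardsX cardsT.
Qed.



Lemma bigR_ge0 (I : Type) (r : seq I) (P : pred I) (F : I -> R) :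
  (forall j, P j -> 0 <= F j) -> 0 <= \big[Rplus/0]_(j <- r | P j) F j.
Proof.
move=> h; apply: (big_ind (fun x => 0 <= x)) => //; first lra.
by move=> x y hx hy; lra.
Qed.

Lemma bigRprod_le (I : Type) (r : seq I) (P : pred I) (F G : I -> R) :
  (forall j, P j -> 0 <= F j <= G j) ->
  \big[Rmult/1]_(j <- r | P j) F j <= \big[Rmult/1]_(j <- r | P j) G j.
Proof.
move=> h.
suff : 0 <= \big[Rmult/1]_(j <- r | P j) F j <= \big[Rmult/1]_(j <- r | P j) G j by case.
apply: (big_ind2 (fun x y => 0 <= x <= y)) => //; first lra.
move=> a b c d [h1 h2] [h3 h4]; split; first nra.
apply: Rmult_le_compat => //.
Qed.

Lemma INR_expn2 (m : nat) : INR (2 ^ m) = 2 ^ m.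
Proof.
elim: m => [|m IH]; first by rewrite /=.
by rewrite expnS -multE mult_INR IH /=.
Qed.

Lemma bigRprod_const (I : finType) (P : {pred I}) (c : R) :
  \big[Rmult/1]_(j in P) c = c ^ #|P|.
Proof.
rewrite big_const; elim: #|P| => [|n IHn]; first by rewrite /=.
by rewrite iterS IHn.
Qed.

Lemma cosh_bound {l : R} : l ^ 2 <= 1/2 -> exp l + exp (- l) <= 2 * exp (2 * l ^ 2).
Proof.
move=> hl.
have e1 : exp l * exp (- l) = 1 by rewrite -exp_plus Rplus_opp_r exp_0.
have u1 := exp_ineq1_le l; have w1 := exp_ineq1_le (- l).
have up := exp_pos l; have wp := exp_pos (- l).
have E := exp_ineq1_le (2 * l ^ 2).
have hl1 : -1 < l < 1 by nra.
have hu : exp l * (1 - l) <= 1 by nra.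
have hw : exp (- l) * (1 + l) <= 1 by nra.
have s : (exp l + exp (- l)) * (1 - l ^ 2) <= 2 by nra.
have : (2 + 4 * l ^ 2) * (1 - l ^ 2) >= 2 by nra.
nra.
Qed.

Definition eps (m : nat) (s : {ffun 'I_m -> bool}) (u : 'I_m * bool) : R :=
  if s u.1 == u.2 then 1 else -1.
Arguments eps {m} s u.

Definition Hf (m : nat) (N : {set 'I_m * bool}) (l : R) (k : 'I_m) (c : bool) : R :=
  \big[Rmult/1]_(b : bool) (if (k, b) \in N then exp (l * (if c == b then 1 else -1)) else 1).
Arguments Hf {m} N l k c.

Lemma exp_sum_eps {m : nat} (N : {set 'I_m * bool}) (l : R) (s : {ffun 'I_m -> bool}) :
  exp (l * \big[Rplus/0]_(u in N) eps s u) = \big[Rmult/1]_(k : 'I_m) Hf N l k (s k).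
Proof.
rewrite big_distrr (big_morph exp exp_plus exp_0) big_mkcond /=.
pose F := fun k b => if (k, b) \in N then exp (l * eps s (k, b)) else 1.
transitivity (\big[Rmult/1]_(p : 'I_m * bool) F p.1 p.2).
  by apply: eq_bigr => -[k b] _.
rewrite -(pair_bigA _ F).
by apply: eq_bigr => k _; apply: eq_bigr => b _.
Qed.

Lemma factor_bound {m : nat} (N : {set 'I_m * bool}) (l : R) (k : 'I_m) :
  l ^ 2 <= 1/2 ->
  0 <= \big[Rplus/0]_(c : bool) Hf N l k c <=
  2 * \big[Rmult/1]_(b : bool) (if (k, b) \in N then exp (2 * l ^ 2) else 1).
Proof.
move=> hl.
have E := exp_ineq1_le (2 * l ^ 2).
have ch := cosh_bound hl.
have e1 : exp l * exp (- l) = 1 by rewrite -exp_plus Rplus_opp_r exp_0.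
have up := exp_pos l; have wp := exp_pos (- l).
have e2 : l * -1 = - l by ring.
have hq : 1 <= exp (2 * l ^ 2) by nra.
move: ch hq; set q := exp (2 * l ^ 2) => ch hq.
rewrite /Hf !big_bool /=.
case: ((k, true) \in N); case: ((k, false) \in N); rewrite ?Rmult_1_r ?Rmult_1_l ?e2; nra.
Qed.

Lemma mgf (m : nat) (N : {set 'I_m * bool}) (l : R) :
  l ^ 2 <= 1/2 ->
  \big[Rplus/0]_(s : {ffun 'I_m -> bool}) exp (l * \big[Rplus/0]_(u in N) eps s u)
    <= 2 ^ m * exp (2 * l ^ 2) ^ #|N|.
Proof.
move=> hl.
rewrite (eq_bigr _ (fun s _ => exp_sum_eps N l s)).
rewrite -(bigA_distr_bigA (fun k c => Hf N l k c)).
change (\big[Rmult/1]_(i : 'I_m) \big[Rplus/0]_(j : bool) Hf N l i j <= 2 ^ m * exp (2 * l ^ 2) ^ #|N|).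
have hb := bigRprod_le _ (index_enum 'I_m) (fun _ => true) _ _ (fun k _ => factor_bound N l k hl).
apply: Rle_trans hb _.
rewrite big_split /= big_const_ord.
have -> : iter m (Rmult 2) 1 = 2 ^ m by elim: m {N} => [|m IH] //=; rewrite IH.
apply: Req_le; congr (_ * _).
pose F := fun k b => if (k, b) \in N then exp (2 * l ^ 2) else 1.
rewrite (pair_bigA _ F).
transitivity (\big[Rmult/1]_(p : 'I_m * bool | p \in N) exp (2 * l ^ 2)).
  rewrite [RHS]big_mkcond.
  change (\big[Rmult/1]_(p : 'I_m * bool) F p.1 p.2 = \big[Rmult/1]_(p : 'I_m * bool) (if p \in N then exp (2 * l ^ 2) else 1)).
  by apply: eq_bigr => -[k b] _.
by rewrite bigRprod_const.
Qed.

Lemma markov_count (T : finType) (f : T -> R) (a : R) :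
  INR #|[set x | Rltb a (f x)]| * exp a <= \big[Rplus/0]_(x : T) exp (f x).
Proof.
rewrite (bigID (fun x => Rltb a (f x))) /=.
have h2 : 0 <= \big[Rplus/0]_(x | ~~ Rltb a (f x)) exp (f x).
  by apply: bigR_ge0 => x _; apply: Rlt_le; apply: exp_pos.
have h1 : \big[Rplus/0]_(x | Rltb a (f x)) exp a <= \big[Rplus/0]_(x | Rltb a (f x)) exp (f x).
  apply: bigR_le => x /RltbP hx; apply: Rlt_le; exact: exp_increasing.
have h3 : \big[Rplus/0]_(x | Rltb a (f x)) exp a = INR #|[set x | Rltb a (f x)]| * exp a.
  rewrite -bigR_const; apply: eq_bigl => x; by rewrite inE.
change (INR #|[set x | Rltb a (f x)]| * exp a <=
  \big[Rplus/0]_(x | Rltb a (f x)) exp (f x) + \big[Rplus/0]_(x | ~~ Rltb a (f x)) exp (f x)).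
lra.
Qed.

Definition Xs {m : nat} (s : {ffun 'I_m -> bool}) : {set 'I_m * bool} :=
  [set u | s u.1 == u.2].

Lemma sum_eps {m : nat} (N : {set 'I_m * bool}) (s : {ffun 'I_m -> bool}) :
  \big[Rplus/0]_(u in N) eps s u = 2 * INR #|N :&: Xs s| - INR #|N|.
Proof.
rewrite (bigID (fun u => u \in Xs s)) /=.
have h1 : \big[Rplus/0]_(u | (u \in N) && (u \in Xs s)) eps s u = INR #|N :&: Xs s| * 1.
  rewrite -bigR_const; apply: eq_big => u; first by rewrite in_setI.
  by rewrite /Xs inE /eps => /andP[_ /eqP ->]; rewrite eqxx.
have h2 : \big[Rplus/0]_(u | (u \in N) && (u \notin Xs s)) eps s u = INR #|N :\: Xs s| * (-1).
  rewrite -bigR_const; apply: eq_big => u; first by rewrite in_setD andbC.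
  by rewrite /Xs inE /eps => /andP[_ /negbTE ->].
change (\big[Rplus/0]_(u | (u \in N) && (u \in Xs s)) eps s u +
  \big[Rplus/0]_(u | (u \in N) && (u \notin Xs s)) eps s u = 2 * INR #|N :&: Xs s| - INR #|N|).
rewrite h1 h2 (INR_cardsID _ N (Xs s)); lra.
Qed.

Definition badset {m : nat} (N : {set 'I_m * bool}) (t : R) : {set {ffun 'I_m -> bool}} :=
  [set s | ~~ (Rleb (INR #|N| / 2 - t) (INR #|N :&: Xs s|) &&
               Rleb (INR #|N :&: Xs s|) (INR #|N| / 2 + t))].

Lemma tail {m : nat} (N : {set 'I_m * bool}) (t l : R) :
  0 < l -> l ^ 2 <= 1/2 ->
  INR #|badset N t| <= 2 * (2 ^ m * exp (2 * l ^ 2) ^ #|N|) * exp (- (2 * l * t)).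
Proof.
move=> hl0 hl.
pose Sg s := \big[Rplus/0]_(u in N) eps s u.
pose U1 := [set s : {ffun 'I_m -> bool} | Rltb (2 * l * t) (l * Sg s)].
pose U2 := [set s : {ffun 'I_m -> bool} | Rltb (2 * l * t) ((- l) * Sg s)].
have sub : badset N t \subset U1 :|: U2.
  apply/subsetP => s; rewrite !inE /Sg sum_eps.
  move: (INR #|N|) (INR #|N :&: Xs s|) => a b.
  case: (RlebP (a / 2 - t) b) => h1;
  case: (RlebP b (a / 2 + t)) => h2 //= _.
  - apply/orP; left; apply/RltbP; apply Rnot_le_lt in h2.
    have := Rmult_lt_compat_l l _ _ hl0 h2; nra.
  - apply/orP; right; apply/RltbP; apply Rnot_le_lt in h1.
    have := Rmult_lt_compat_l l _ _ hl0 h1; nra.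
  - apply/orP; right; apply/RltbP; apply Rnot_le_lt in h1.
    have := Rmult_lt_compat_l l _ _ hl0 h1; nra.
have c1 := INR_le (leq_trans (subset_leq_card sub) (leq_card_setU U1 U2)).
rewrite -plusE plus_INR in c1.
have m1 := markov_count _ (fun s => l * Sg s) (2 * l * t).
have m2 := markov_count _ (fun s => (- l) * Sg s) (2 * l * t).
have g1 := mgf _ N l hl.
have hl' : (- l) ^ 2 <= 1/2 by nra.
have g2 := mgf _ N (- l) hl'.
have e : (- l) ^ 2 = l ^ 2 by ring.
rewrite e in g2.
have ee : exp (2 * l * t) * exp (- (2 * l * t)) = 1 by rewrite -exp_plus Rplus_opp_r exp_0.
have ep := exp_pos (- (2 * l * t)).
have q1 : INR #|U1| <= (2 ^ m * exp (2 * l ^ 2) ^ #|N|) * exp (- (2 * l * t)).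
  have : INR #|U1| * exp (2 * l * t) * exp (- (2 * l * t)) <=
         (2 ^ m * exp (2 * l ^ 2) ^ #|N|) * exp (- (2 * l * t)).
    apply: Rmult_le_compat_r; first lra.
    exact: Rle_trans m1 g1.
  by rewrite Rmult_assoc ee Rmult_1_r.
have q2 : INR #|U2| <= (2 ^ m * exp (2 * l ^ 2) ^ #|N|) * exp (- (2 * l * t)).
  have : INR #|U2| * exp (2 * l * t) * exp (- (2 * l * t)) <=
         (2 ^ m * exp (2 * l ^ 2) ^ #|N|) * exp (- (2 * l * t)).
    apply: Rmult_le_compat_r; first lra.
    exact: Rle_trans m2 g2.
  by rewrite Rmult_assoc ee Rmult_1_r.
lra.
Qed.



Definition Nb {V : finType} (e : rel V) (v : V) : {set V} := [set u | e v u].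

Definition Cp {m : nat} (N : {set 'I_m * bool}) : {set 'I_m} :=
  [set k | [exists b, (k, b) \in N]].

Lemma core (m d : nat) (e : rel ('I_m * bool)) (t l : R)
  (hsym : symmetric e) (hreg : forall v, #|Nb e v| = d)
  (hl0 : 0 < l) (hl : l ^ 2 <= 1/2)
  (hp4 : 4 * (2 * exp (2 * l ^ 2) ^ d * exp (- (2 * l * t))) * (2 * INR d * INR d) <= 1)
  (hp2 : 2 * (2 * exp (2 * l ^ 2) ^ d * exp (- (2 * l * t))) < 1) :
  exists s : {ffun 'I_m -> bool}, forall v,
    Rleb (INR d / 2 - t) (INR #|Nb e v :&: Xs s|) &&
    Rleb (INR #|Nb e v :&: Xs s|) (INR d / 2 + t).
Proof.
set p := 2 * exp (2 * l ^ 2) ^ d * exp (- (2 * l * t)).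
pose A := fun v => badset (Nb e v) t.
pose G := fun v => [set w | ~~ [disjoint Cp (Nb e v) & Cp (Nb e w)]].
have cardO : INR #|{ffun 'I_m -> bool}| = 2 ^ m.
  by rewrite card_ffun card_bool card_ord INR_expn2.
have depA : forall v (f g : {ffun 'I_m -> bool}),
    (forall k, k \in Cp (Nb e v) -> f k = g k) -> (f \in A v) = (g \in A v).
  move=> v f g hfg.
  rewrite /A /badset !inE.
  have -> : Nb e v :&: Xs f = Nb e v :&: Xs g.
    apply/setP => u; rewrite !inE.
    case hu: (e v u) => //=.
    rewrite hfg //; rewrite inE; apply/existsP; exists u.2.
    by rewrite -surjective_pairing inE.
  by [].
have Hind : forall i (S : {set _}), [disjoint S & G i] ->
    INR #|A i :&: Bs A S| * INR #|{ffun 'I_m -> bool}| <= INR #|A i| * INR #|Bs A S|.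
  move=> i S hd; apply: Req_le; rewrite -!mult_INR !multE; congr INR.
  apply: (indep_prod _ (Cp (Nb e i))).
    by move=> f g h; apply: depA.
  move=> f g h.
  have hj : forall j, j \in S -> (f \in A j) = (g \in A j).
    move=> j hj; apply: depA => k hk; apply: h.
    apply/negP => hki.
    have : j \notin G i.
      by rewrite (disjointFr hd hj).
    rewrite inE negbK => hdis; by rewrite (disjointFr hdis hki) in hk.
  apply/bigcapP/bigcapP => H j hjS; have := H j hjS; rewrite !in_setC (hj j hjS) //.
have HA : forall i, INR #|A i| <= p * INR #|{ffun 'I_m -> bool}|.
  move=> i; rewrite cardO; apply: Rle_trans (tail (Nb e i) t l hl0 hl) _.
  rewrite hreg /p; apply: Req_le; ring.
have HG : forall i, INR #|G i| <= 2 * INR d * INR d.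
  move=> i.
  have sub : G i \subset \bigcup_(u in Nb e i) (Nb e (u.1, true) :|: Nb e (u.1, false)).
    apply/subsetP => w; rewrite inE -setI_eq0 => /set0Pn [k].
    rewrite !inE => /andP [/existsP [b hb] /existsP [b' hb']].
    apply/bigcupP; exists (k, b) => //=.
    rewrite !inE in hb' *; rewrite (hsym (k, true)) (hsym (k, false)).
    by case: b' hb' => ->; rewrite ?orbT.
  have c := leq_trans (subset_leq_card sub) (card_bigcup_le _ _ _ _).
  have c2 : (\sum_(u in Nb e i) #|Nb e (u.1, true) :|: Nb e (u.1, false)| <= \sum_(u in Nb e i) (2 * d))%N.
    apply: leq_sum => u _; apply: leq_trans (leq_card_setU _ _) _; rewrite !hreg; lia.
  rewrite sum_nat_const hreg in c2.
  have := INR_le (leq_trans c c2); rewrite -!multE !mult_INR /=; lra.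
have HT : (0 < #|{ffun 'I_m -> bool}|)%N.
  by apply/card_gt0P; exists [ffun => true].
have Hp0 : 0 <= p.
  rewrite /p; have := exp_pos (2 * l ^ 2); have := exp_pos (- (2 * l * t)) => h1 h2.
  apply: Rmult_le_pos; last lra; apply: Rmult_le_pos; first lra.
  apply: pow_le; lra.
have [s hs] := lll _ _ _ _ _ _ Hind HA HG Hp0 hp4 hp2 HT.
exists s => v; have := hs v.
by rewrite /A /badset inE negbK hreg.
Qed.



Lemma exp_pow_nat (x : R) (n : nat) : exp x ^ n = exp (INR n * x).
Proof.
elim: n => [|n IH]; first by rewrite /= Rmult_0_l exp_0.
rewrite S_INR -tech_pow_Rmult IH -exp_plus; f_equal; ring.
Qed.

Lemma exp_big {y : R} : 2 ^ 32 <= y -> 16 * y ^ 6 <= exp (y / 2).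
Proof.
move=> hy.
have c1 : 16 * 14 ^ 7 <= 2 ^ 32.
  have : 14 ^ 7 <= 16 ^ 7 by apply: pow_incr; lra.
  have : 16 * 16 ^ 7 = 2 ^ 32 by ring.
  lra.
have y0 : 0 <= y by have := pow_lt 2 32; lra.
set z := y / 14.
have ez : exp (y / 2) = exp z ^ 7.
  rewrite exp_pow_nat /z; f_equal; simpl; field.
have hz : z ^ 7 <= exp z ^ 7.
  apply: pow_incr; have := exp_ineq1_le z; rewrite /z; lra.
have hz7 : z ^ 7 = y * y ^ 6 / 14 ^ 7 by rewrite /z; field.
have p6 : 0 <= y ^ 6 by apply: pow_le.
have p14 : 0 < 14 ^ 7 by apply: pow_lt; lra.
have : 16 * 14 ^ 7 * y ^ 6 <= y * y ^ 6 by apply: Rmult_le_compat_r => //; lra.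
move=> h.
have : 16 * y ^ 6 <= y * y ^ 6 / 14 ^ 7.
  apply: (Rmult_le_reg_r (14 ^ 7)) => //.
  have -> : y * y ^ 6 / 14 ^ 7 * 14 ^ 7 = y * y ^ 6 by field; lra.
  lra.
rewrite ez; lra.
Qed.

Lemma numeric (d : nat) : (2 ^ 96 <= d)%N ->
  let t := Rpower (INR d) (2 / 3) in
  let l := t / (2 * INR d) in
  0 < l /\ l ^ 2 <= 1/2 /\
  4 * (2 * exp (2 * l ^ 2) ^ d * exp (- (2 * l * t))) * (2 * INR d * INR d) <= 1 /\
  2 * (2 * exp (2 * l ^ 2) ^ d * exp (- (2 * l * t))) < 1.
Proof.
move=> hd0 t l.
have hd : 2 ^ 96 <= INR d by rewrite -INR_expn2; apply: INR_le.
have dpos : 0 < INR d by have := pow_lt 2 96; lra.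
set y := Rpower (INR d) (1 / 3).
have ypos : 0 < y by rewrite /y /Rpower; apply: exp_pos.
have ht : t = y ^ 2.
  rewrite /y -Rpower_pow // Rpower_mult /t; f_equal; simpl; field.
have hy3 : INR d = y ^ 3.
  rewrite /y -Rpower_pow // Rpower_mult.
  have -> : 1 / 3 * INR 3 = 1 by simpl; field.
  by rewrite Rpower_1.
have hy : 2 ^ 32 <= y.
  apply: Rnot_lt_le => hlt.
  have : y ^ 3 < (2 ^ 32) ^ 3.
    have h1 : y * y < 2 ^ 32 * 2 ^ 32 by apply: Rmult_le_0_lt_compat; lra.
    have h2 : y * y * y < 2 ^ 32 * 2 ^ 32 * 2 ^ 32.
      apply: Rmult_le_0_lt_compat => //; nra.
    simpl; lra.
  have : (2 ^ 32) ^ 3 = 2 ^ 96 by ring.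
  lra.
have y1 : 1 <= y by have := pow_R1_Rle 2 32; lra.
have hl : l = / (2 * y).
  rewrite /l ht hy3; field; lra.
have eb := exp_big hy.
have ee : 2 * exp (2 * l ^ 2) ^ d * exp (- (2 * l * t)) = 2 * exp (- (y / 2)).
  rewrite exp_pow_nat Rmult_assoc -exp_plus; f_equal; f_equal.
  rewrite hl ht hy3; field; lra.
rewrite ee.
have e1 : exp (y / 2) * exp (- (y / 2)) = 1 by rewrite -exp_plus Rplus_opp_r exp_0.
have ep := exp_pos (- (y / 2)).
have y6 : 2 * INR d * INR d = 2 * y ^ 6 by rewrite hy3; ring.
rewrite y6.
have p6 : 1 <= y ^ 6 by apply: pow_R1_Rle.
split; first by rewrite hl; apply: Rinv_0_lt_compat; lra.
split.
  rewrite hl; have : 0 < y * y by nra.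
  move=> h; rewrite /= Rmult_1_r -Rinv_mult.
  apply: (Rmult_le_reg_l (2 * y * (2 * y))); first nra.
  rewrite Rinv_r; nra.
split; nra.
Qed.



Lemma card_bij_set {T U : finType} {f : T -> U} {g : U -> T}
  (fK : cancel f g) (gK : cancel g f) (P : pred U) :
  #|[set x | P (f x)]| = #|[set y | P y]|.
Proof.
have -> : [set y | P y] = f @: [set x | P (f x)].
  apply/setP => y; rewrite inE.
  apply/idP/imsetP => [hy|[x]]; last by rewrite inE => hx ->.
  by exists (g y); rewrite ?inE gK.
by rewrite card_imset //; exact: can_inj fK.
Qed.

Lemma deg_ok_compl (d c : nat) : deg_ok d c -> (c <= d)%N -> deg_ok d (d - c).
Proof.
rewrite /deg_ok => h hc; rewrite minus_INR; last by apply/leP.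
lra.
Qed.

Lemma deg_ok_of (d c : nat) (t : R) : t = Rpower (INR d) (2 / 3) ->
  Rleb (INR d / 2 - t) (INR c) && Rleb (INR c) (INR d / 2 + t) -> deg_ok d c.
Proof.
move=> -> /andP [/RlebP h1 /RlebP h2]; rewrite /deg_ok; lra.
Qed.

Local Close Scope R_scope.

Theorem lemma3p1 :
  exists d0 : nat, 0 < d0 /\
    forall d : nat, d0 <= d ->
    forall n : nat, ~~ odd n -> d.+1 <= n ->
    forall e : rel 'I_n, simple_graph e -> regular e d ->
    exists X Y : {set 'I_n},
      [disjoint X & Y] /\ X :|: Y = setT /\ #|X| = n./2 /\ #|Y| = n./2 /\
      (forall v, v \in X :|: Y -> deg_ok d (deg_bip e X Y v)) /\
      (forall v, v \in X -> deg_ok d (deg_induced e X v)) /\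
      (forall v, v \in Y -> deg_ok d (deg_induced e Y v)).
Proof.
exists (2 ^ 96); split; first by rewrite expn_gt0.
move=> d hd n hn hdn e [hsym hirr] hreg.
set m := n./2.
have hn2 : n = m * 2.
  by rewrite /m muln2 -{1}(odd_double_half n) (negbTE hn).
have hnm : #|{: 'I_m * bool}| = n by rewrite card_prod card_ord card_bool hn2.
pose phi := fun x : 'I_m * bool => cast_ord hnm (enum_rank x).
pose psi := fun i : 'I_n => enum_val (cast_ord (esym hnm) i).
have phiK : cancel phi psi by move=> x; rewrite /phi /psi cast_ordK enum_rankK.
have psiK : cancel psi phi by move=> i; rewrite /phi /psi enum_valK cast_ordKV.
pose e' := fun x y => e (phi x) (phi y).
have hsym' : symmetric e' by move=> x y; exact: hsym.
have hreg' : forall v, #|Nb e' v| = d.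
  move=> v; rewrite /Nb /e' (card_bij_set phiK psiK (fun u => e (phi v) u)).
  exact: hreg.
have [hl0 [hl [hp4 hp2]]] := numeric d hd.
have [s hs] := core _ _ _ _ _ hsym' hreg' hl0 hl hp4 hp2.
pose X := [set i | psi i \in Xs s].
have cardX : #|X| = m.
  rewrite /X (card_bij_set psiK phiK (fun x => x \in Xs s)).
  have -> : [set y | y \in Xs s] = [set (k, s k) | k in 'I_m].
    apply/setP => -[k b]; rewrite !inE /=.
    apply/eqP/imsetP => [<-|[k' _ [-> ->]]]; by [exists k|].
  by rewrite card_imset ?card_ord // => a b [].
have key1 : forall v, #|[set u in X | e v u]| = #|Nb e' (psi v) :&: Xs s|.
  move=> v.
  have -> : Nb e' (psi v) :&: Xs s = [set x | (phi x \in X) && e v (phi x)].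
    by apply/setP => x; rewrite !inE phiK /e' psiK andbC.
  symmetry; exact: (card_bij_set phiK psiK (fun u => (u \in X) && e v u)).
have key2 : forall v, #|[set u in ~: X | e v u]| = (d - #|[set u in X | e v u]|)%N.
  move=> v; rewrite -(hreg v) -(cardsID X [set u | e v u]).
  have -> : [set u in X | e v u] = [set u | e v u] :&: X.
    by apply/setP => u; rewrite !inE andbC.
  have -> : [set u in ~: X | e v u] = [set u | e v u] :\: X.
    by apply/setP => u; rewrite !inE andbC.
  by rewrite addKn.
have okX : forall v, deg_ok d #|[set u in X | e v u]|.
  move=> v; rewrite key1; exact: (deg_ok_of _ _ _ (erefl _) (hs (psi v))).
have leX : forall v, (#|[set u in X | e v u]| <= d)%N.
  move=> v; rewrite -(hreg v); apply: subset_leq_card; apply/subsetP => u.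
  by rewrite !inE => /andP[].
have okY : forall v, deg_ok d #|[set u in ~: X | e v u]|.
  by move=> v; rewrite key2; apply: deg_ok_compl.
exists X, (~: X).
split; first by rewrite -setI_eq0 setICr.
split; first by rewrite setUCr.
split; first by [].
split.
  have := cardsC X; rewrite cardX card_ord /m => h.
  move: h hn2; rewrite -/m; clearbody m; move: #|~: X| => k; lia.
split.
  by move=> v _; rewrite /deg_bip; case: (v \in X).
split.
  by move=> v _; rewrite /deg_induced.
by move=> v _; rewrite /deg_induced.
Qed.
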